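(* Let $r>5$ with $r\not\equiv 0\pmod 3$, and let $C_r$ be the directed cycle of length $r$. If there exist positive integers $b,k$ with $k<4b$ such that $C_r$ admits a $b$-fold oriented $k$-coloring, then $r$ is divisible by $4q+3$ for some natural number $q$.
   Context: The directed cycle $C_r$ has vertices $u_i$, $i\in\mathbb{Z}/r\mathbb{Z}$, and arcs $u_iu_{i+1}$. For a set $S$ of $k$ colors, a $b$-fold oriented $k$-coloring of an oriented graph $G$ is a map $f$ from $V(G)$ to the $b$-element subsets of $S$ such that (i) $f(x)\cap f(y)=\emptyset$ for every arc $xy$, and (ii) for all arcs $xy, zw$, $f(x)\cap f(w)\neq\emptyset$ implies $f(y)\cap f(z)=\emptyset$. (A $b$-fold oriented $k$-coloring with $k/b<4$ is called miser in the paper.) *)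

(* Defs.v *)
From mathcomp Require Import all_boot.
Unset Printing Implicit Defensive.

(* The directed cycle C_r: vertices u_i, i in Z/rZ (represented by 'I_r),
   arcs u_i u_{i+1}. *)
Definition dcycle_arc (r : nat) : rel 'I_r :=
  fun i j => nat_of_ord j == (i.+1 %% r).

Definition bfold_oriented_coloring (V : finType) (arc : rel V) (b k : nat)
    (f : V -> {set 'I_k}) : Prop :=
  (forall x, #|f x| = b) /\
  (forall x y, arc x y -> [disjoint f x & f y]) /\
  (forall x y z w, arc x y -> arc z w ->
     ~~ [disjoint f x & f w] -> [disjoint f y & f z]).

Definition has_bfold_oriented_coloring (V : finType) (arc : rel V) (b k : nat)
  : Prop := exists f : V -> {set 'I_k}, @bfold_oriented_coloring V arc b k f.

(* Main.v *)
Require Import Defs.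
From mathcomp Require Import all_boot.
From mathcomp Require Import zify.

Module CombAux.
Set Implicit Arguments.
Unset Strict Implicit.

Record good (r : nat) (M : nat -> nat -> bool) : Prop := Good {
 g_r : 0 < r;
 g_per : forall p q, M (p + r) q = M p q;
 g_sym : forall p q, M p q = M q p;
 g_refl : forall p, M p p;
 g_adj : forall p, M p p.+1 = false;
 g_pin : forall p q, M p q.+1 -> M p.+1 q -> False;
 g_K4 : forall a b c d, [|| M a b, M a c, M a d, M b c, M b d | M c d] }.

Lemma per2 r M (G : good r M) p q : M p (q + r) = M p q.
Proof. by rewrite (g_sym G) (g_per G) (g_sym G). Qed.

Lemma adjE r M (G : good r M) p q : q = p.+1 -> M p q = false.
Proof. by move=> ->; apply: (g_adj G). Qed.

Lemma M2 r M (G : good r M) p q : q = p + 2 -> M p q = false.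
Proof.
move=> ->; apply/negP => h; apply: (g_pin G (p := p) (q := p.+1)).
  by rewrite addn2 in h.
exact: (g_refl G).
Qed.

Lemma step1 r M (G : good r M) d p : M p (p + d) = M 0 d.
Proof.
elim/ltn_ind: d p => d IH p.
have IHe : forall d' p' q', d' < d -> q' = p' + d' -> M p' q' = M 0 d'.
  by move=> d' p' q' lt ->; apply: IH.
case: d IH IHe => [|[|[|e]]] IH IHe.
- by rewrite addn0 !(g_refl G).
- by rewrite !(adjE G) // addn1.
- by rewrite !(M2 G).
case h1: (M 0 e.+1).
  have F : forall p, M p (p + e.+3) = false.
    move=> p'; apply/negP => h; apply: (g_pin G (p := p') (q := p' + e.+2)).
      by rewrite -addnS.
    by rewrite (IHe e.+1) //; lia.
  by rewrite !F.
have e1 : forall p q, q = p + e.+1 -> M p q = false.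
  by move=> p' q' hq; rewrite (IHe e.+1) //; lia.
case h2: (M 0 e.+2).
  have e2 : forall p q, q = p + e.+2 -> M p q = true.
    by move=> p' q' hq; rewrite (IHe e.+2) //; lia.
  have F1 : forall p q, q = p + e.+4 -> M p q = false.
    move=> p' q' ->; apply/negP => h; apply: (g_pin G (p := p') (q := p' + e.+3)).
      by rewrite -addnS.
    by rewrite e2 //; lia.
  pose E p := M p (p + e.+3).
  pose X p := M p (p + e.+4.+1).
  have Kb : forall p, E p || X p.
    move=> p'; have := g_K4 G p' (p' + e.+3) (p' + e.+4) (p' + e.+4.+1).
    rewrite (F1 p' (p' + e.+4)) //.
    rewrite (adjE G (p := p' + e.+3)); last lia.
    rewrite (M2 G (p := p' + e.+3)); last lia.
    rewrite (adjE G (p := p' + e.+4)); last lia.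
    by rewrite /E /X /= !orbF; case: (M p' (p' + e.+3)).
  have Kc : forall p, X p || E p.+1.
    move=> p'; have := g_K4 G p' p'.+1 (p' + e.+4) (p' + e.+4.+1).
    rewrite (g_adj G) (F1 p' (p' + e.+4)) //.
    rewrite (F1 p'.+1 (p' + e.+4.+1)); last lia.
    rewrite (adjE G (p := p' + e.+4)); last lia.
    have -> : M p'.+1 (p' + e.+4) = E p'.+1 by rewrite /E; congr M; lia.
    by rewrite /X /= !orbF.
  have Pn : forall p, X p -> E p.+1 -> False.
    move=> p' hx he; apply: (g_pin G (p := p') (q := p' + e.+4)).
      by rewrite /X addnS in hx.
    by move: he; rewrite /E; congr (is_true (M _ _)); lia.
  have Ka : forall p, X p || E p.+2.
    move=> p'; have := g_K4 G p' p'.+1 p'.+2 (p' + e.+4.+1).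
    rewrite (g_adj G) (g_adj G) (M2 G (p := p')); last lia.
    rewrite (F1 p'.+1 (p' + e.+4.+1)); last lia.
    have -> : M p'.+2 (p' + e.+4.+1) = E p'.+2 by rewrite /E; congr M; lia.
    by rewrite /X.
  have I1 : forall p, E p.+1 -> E p.
    move=> p' he; have := Kb p'; have := Kc p'; have := Pn p'.
    by case: (X p'); case: (E p') => //; move=> /(_ isT he).
  have I2 : forall p, E p.+1 -> E p.+2.
    move=> p' he; have := Ka p'; have := Pn p'.
    by case: (X p') => //; move=> /(_ isT he).
  have Eper : forall p, E (p + r) = E p.
    by move=> p'; rewrite /E -addnA (addnC r) addnA per2 // (g_per G).
  have I3 : forall p, E p = E p.+1.
    move=> [|p'].
      apply/idP/idP; last exact: I1.
      move=> h0; rewrite -Eper; move: h0; rewrite -Eper.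
      case: r G Eper => [|r'] G' _; first by have := g_r G'.
      rewrite add0n => h; have := I2 r' (h).
      by rewrite addSn.
    by apply/idP/idP; [apply: I2 | apply: I1].
  have Ec : forall p, E p = E 0.
    by elim=> [|p' ihp] //; rewrite -I3.
  by have := Ec p; rewrite /E add0n.
(* case M 0 e.+1 = false, M 0 e.+2 = false *)
have e2 : forall p q, q = p + e.+2 -> M p q = false.
  by move=> p' q' hq; rewrite (IHe e.+2) //; lia.
have T : forall p, M p (p + e.+3) = true.
  move=> p'; have := g_K4 G p' p'.+1 p'.+2 (p' + e.+3).
  rewrite (g_adj G) (g_adj G) (M2 G (p := p')); last lia.
  rewrite (e2 p'.+1); last lia.
  rewrite (e1 p'.+2); last lia.
  by rewrite /= orbF.
by rewrite !T.
Qed.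

Lemma Mw r M (G : good r M) p q d : q = p + d -> M p q = M 0 d.
Proof. by move=> ->; rewrite (step1 G). Qed.

Lemma wper r M (G : good r M) x : M 0 (x + r) = M 0 x.
Proof. exact: (per2 G). Qed.

Lemma wmul r M (G : good r M) x n : M 0 (x + n * r) = M 0 x.
Proof.
elim: n => [|n IH]; first by rewrite mul0n addn0.
by rewrite mulSn addnCA addnC wper // addnC.
Qed.

Lemma R1 r M (G : good r M) x : M 0 x -> M 0 (x + 2) -> False.
Proof.
move=> h1 h2; apply: (g_pin G (p := 0) (q := x.+1)); first by move: h2; rewrite addn2.
by rewrite (Mw G (p := 1) (q := x.+1) (d := x)) //; lia.
Qed.

Lemma R2 r M (G : good r M) x : ~~ M 0 x -> ~~ M 0 x.+1 -> M 0 x.+2.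
Proof.
move=> h1 h2; have := g_K4 G 0 1 2 x.+2.
rewrite (g_adj G) (M2 G (p := 0)) // (g_adj G).
rewrite (Mw G (p := 1) (q := x.+2) (d := x.+1)); last lia.
rewrite (Mw G (p := 2) (q := x.+2) (d := x)); last lia.
by rewrite (negbTE h1) (negbTE h2) /= !orbF.
Qed.

Lemma Gl r M (G : good r M) a d :
  ~~ M 0 a -> ~~ M 0 a.+1 -> ~~ M 0 (a + d) -> ~~ M 0 (a + d).+1 -> M 0 d.
Proof.
move=> h1 h2 h3 h4; have := g_K4 G 0 1 a.+1 (a + d).+1.
rewrite (g_adj G) (negbTE h2) (negbTE h4).
rewrite (Mw G (p := 1) (q := a.+1) (d := a)); last lia.
rewrite (Mw G (p := 1) (q := (a + d).+1) (d := a + d)); last lia.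
rewrite (Mw G (p := a.+1) (q := (a + d).+1) (d := d)); last lia.
by rewrite (negbTE h1) (negbTE h3).
Qed.

Lemma w0 r M (G : good r M) : M 0 0.
Proof. exact: (g_refl G 0). Qed.
Lemma w1 r M (G : good r M) : M 0 1 = false.
Proof. exact: (g_adj G 0). Qed.
Lemma w2 r M (G : good r M) : M 0 2 = false.
Proof. exact: (M2 G (p := 0)). Qed.
Lemma wrm1 r M (G : good r M) : M 0 r.-1 = false.
Proof.
case: r G => [|r'] G /=; first by have := g_r G.
by rewrite (g_sym G) -(per2 G r' 0) add0n (g_adj G).
Qed.

Definition single (M : nat -> nat -> bool) x :=
  [&& 0 < x, ~~ M 0 x.-1, M 0 x & ~~ M 0 x.+1].

Lemma single_r r M (G : good r M) : single M r.
Proof.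
rewrite /single (g_r G) (wrm1 G) -[X in M _ X](add0n r) (wper G) (w0 G) /=.
by rewrite -addn1 addnC (wper G) (w1 G).
Qed.

Lemma R1' r M (G : good r M) a b : M 0 a -> b = a + 2 -> M 0 b = false.
Proof. by move=> ha ->; apply/negP; apply: (R1 G ha). Qed.

Lemma R2' r M (G : good r M) a b c :
  ~~ M 0 a -> ~~ M 0 b -> b = a.+1 -> c = a.+2 -> M 0 c.
Proof. by move=> ha hb eb ->; apply: (R2 G ha); rewrite -eb. Qed.

Lemma Gl' r M (G : good r M) a b c e d :
  ~~ M 0 a -> ~~ M 0 b -> ~~ M 0 c -> ~~ M 0 e ->
  b = a.+1 -> c = a + d -> e = (a + d).+1 -> M 0 d.
Proof.
move=> ha hb hc he eb ec ee; apply: (Gl G ha); by [rewrite -eb | rewrite -ec | rewrite -ee].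
Qed.

Lemma wE (M : nat -> nat -> bool) a b : a = b -> M 0 a = M 0 b.
Proof. by move=> ->. Qed.

Lemma LBlem r M (G : good r M) m : M 0 m -> ~~ M 0 m.-1 -> ~~ M 0 m.+1 ->
  forall x, M 0 (x + m) = M 0 x /\ M 0 (x.+1 + m) = M 0 x.+1.
Proof.
move=> wm wmm1 wmp1.
have m0 : 0 < m by case: m wm wmm1 {wmp1} => // ->.
elim=> [|x [IH0 IH1]].
  split; first by rewrite add0n wm (w0 G).
  by rewrite add1n (negbTE wmp1) (w1 G).
split; first exact IH1.
case hx: (M 0 x).
  rewrite (R1' G (a := x) (b := x.+2)) //; last lia.
  rewrite (R1' G (a := x + m) (b := x.+2 + m)) //; [by rewrite IH0 | lia].
case hx1: (M 0 x.+1); last first.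
  rewrite (R2' G (a := x) (b := x.+1) (c := x.+2)) ?hx ?hx1 //.
  apply: (R2' G (a := x + m) (b := x.+1 + m)).
  - by rewrite IH0 hx.
  - by rewrite IH1 hx1.
  - by rewrite addSn.
  - by rewrite addSn addSn.
have t1 : M 0 (x.+1 + m) by rewrite IH1.
have f3 : M 0 x.+3 = false by rewrite (R1' G (a := x.+1)) //; lia.
have fm3 : M 0 (x + m).+3 = false by rewrite (R1' G (a := x.+1 + m)) //; lia.
case h2: (M 0 x.+2); case h2m: (M 0 (x.+2 + m)) => //.
  have f4 : M 0 x.+4 = false by rewrite (R1' G (a := x.+2)) //; lia.
  have : M 0 (m.-1).
    apply: (Gl' G (a := x.+3) (b := x.+4) (c := x.+2 + m) (e := (x + m).+3)).
    - by rewrite f3.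
    - by rewrite f4.
    - by rewrite h2m.
    - by rewrite fm3.
    - by [].
    - lia.
    - lia.
  by rewrite (negbTE wmm1).
have fm4 : M 0 (x + m).+4 = false by rewrite (R1' G (a := x.+2 + m)) //; lia.
have : M 0 (m.+1).
  apply: (Gl' G (a := x.+2) (b := x.+3) (c := (x + m).+3) (e := (x + m).+4)).
  - by rewrite h2.
  - by rewrite f3.
  - by rewrite fm3.
  - by rewrite fm4.
  - by [].
  - lia.
  - lia.
by rewrite (negbTE wmp1).
Qed.

Lemma divlem r M (G : good r M) m : (forall y, M 0 (y + m) = M 0 y) -> 0 < m ->
  (forall n, single M n -> m <= n) -> m %| r.
Proof.
move=> LB m0 minm.
have perm : forall y n, M 0 (y + n * m) = M 0 y.
  move=> y; elim=> [|n IH]; first by rewrite mul0n addn0.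
  by rewrite mulSn addnCA addnC LB IH.
rewrite /dvdn; apply/negPn/negP => s0.
have sm' : r %% m < m by rewrite ltn_mod.
have er := divn_eq r m.
have r0 := g_r G.
set s := r %% m in s0 sm' er.
set t := r %/ m * m in er.
have : m <= s.
  apply: minm; apply/and4P; split.
  - by rewrite lt0n.
  - rewrite -(perm _ (r %/ m)) -/t (wE M (b := r.-1)) ?(wrm1 G) //.
    clear -er r0 s0; rewrite -lt0n in s0; lia.
  - rewrite -(perm _ (r %/ m)) -/t (wE M (b := 0 + r)) ?(wper G) ?(w0 G) //.
    clear -er; lia.
  - rewrite -(perm _ (r %/ m)) -/t (wE M (b := 1 + r)) ?(wper G) ?(w1 G) //.
    clear -er; lia.
by rewrite leqNgt sm'.
Qed.

Theorem comb r M (G : good r M) : exists q, (4 * q + 3) %| r.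
Proof.
have exs : exists n, single M n by exists r; exact: single_r.
case: (ex_minnP exs) => m sm minm.
move: (sm) => /and4P [m0 wmm1 wm wmp1].
have m3 : 3 <= m.
  case: m {minm sm} m0 wmm1 wm wmp1 => [|[|[|m]]] //.
    by rewrite (w1 G).
  by rewrite (w2 G).
pose Q y := M 0 y == ((y %% 4 == 0) || (y %% 4 == 3)).
have LA : forall x, x.+2 <= m -> [&& Q x, Q x.+1 & Q x.+2].
  elim=> [|x IH] hx.
    by rewrite /Q (w0 G) (w1 G) (w2 G).
  have /and3P [q0 q1 q2] := IH (ltnW hx).
  rewrite q1 q2 /=.
  move: q0 q1 q2; rewrite /Q.
  have : x %% 4 < 4 by rewrite ltn_mod.
  have e1 : x.+1 %% 4 = (x %% 4).+1 %% 4 by rewrite -addn1 -modnDml addn1.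
  have e2 : x.+2 %% 4 = (x %% 4).+2 %% 4 by rewrite -addn2 -modnDml addn2.
  have e3 : x.+3 %% 4 = (x %% 4).+3 %% 4 by rewrite -addn3 -modnDml addn3.
  rewrite e1 e2 e3.
  case: (x %% 4) => [|[|[|[|n]]]] // _ /eqP q0 /eqP q1 /eqP q2.
  - (* x = 0 mod 4 : x+3 = 3 *)
    rewrite /= in q0 q1 q2 *.
    by rewrite (R2 G) // ?q1 ?q2.
  - (* x = 1 mod 4 : x+3 = 0 *)
    rewrite /= in q0 q1 q2 *.
    case h: (M 0 x.+3) => //.
    have : m <= x.+2.
      by apply: minm; rewrite /single /= q2 q1 h.
    by rewrite leqNgt hx.
  - (* x = 2 mod 4 : x+3 = 1 *)
    rewrite /= in q0 q1 q2 *.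
    apply/eqP/negP => h; apply: (R1 G (x := x.+1)); first by rewrite q1.
    by rewrite addn2.
  - rewrite /= in q0 q1 q2 *.
    apply/eqP/negP => h; apply: (R1 G (x := x.+1)); first by rewrite q1.
    by rewrite addn2.
have [m' em] : exists m', m = m'.+2 by exists m.-2; lia.
have mod3 : m %% 4 = 3.
  have /and3P [_ qa qb] : [&& Q m', Q m'.+1 & Q m'.+2] by apply: LA; rewrite em.
  move: qa qb; rewrite /Q -em wm.
  move: wmm1; rewrite em /= => /negbTE ->.
  rewrite -em.
  have : m %% 4 < 4 by rewrite ltn_mod.
  have e1 : m %% 4 = (m'.+1 %% 4).+1 %% 4 by rewrite em -addn1 -modnDml addn1.
  rewrite e1.
  have : m'.+1 %% 4 < 4 by rewrite ltn_mod.
  by case: (m'.+1 %% 4) => [|[|[|[|n]]]].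
have LB := LBlem G wm wmm1 wmp1.
have mr : m %| r.
  by apply: (divlem G (m := m)) => // y; exact: (LB y).1.
exists (m %/ 4).
have := divn_eq m 4; rewrite mod3 => em4.
by rewrite mulnC -em4.
Qed.

End CombAux.
Import CombAux.
Unset Implicit Arguments.
Set Strict Implicit.

Lemma card4 (T : finType) (A B C D : {set T}) :
  [disjoint A & B] -> [disjoint A & C] -> [disjoint A & D] ->
  [disjoint B & C] -> [disjoint B & D] -> [disjoint C & D] ->
  #|A :|: B :|: C :|: D| = #|A| + #|B| + #|C| + #|D|.
Proof.
move=> hAB hAC hAD hBC hBD hCD.
rewrite cardsU setIUl setIUl (disjoint_setI0 hAD) (disjoint_setI0 hBD)
  (disjoint_setI0 hCD) !setU0 cards0 subn0.
rewrite cardsU setIUl (disjoint_setI0 hAC) (disjoint_setI0 hBC) setU0 cards0 subn0.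
by rewrite cardsU (disjoint_setI0 hAB) cards0 subn0.
Qed.

Arguments card4 {T A B C D}.

Theorem lemma8 (r : nat) :
  5 < r -> r %% 3 != 0 ->
  (exists b k : nat, 0 < b /\ 0 < k /\ k < 4 * b /\
     @has_bfold_oriented_coloring (ordinal r) (dcycle_arc r) b k) ->
  exists q : nat, (4 * q + 3) %| r.
Proof.
move=> hr _ [b [k [b0 [k0 [kb [f [hcard [hdis hor]]]]]]]].
have r0 : 0 < r by apply: leq_trans hr.
pose ordr p : 'I_r := Ordinal (ltn_pmod p r0).
pose M p q := ~~ [disjoint f (ordr p) & f (ordr q)].
have arcS : forall p, dcycle_arc r (ordr p) (ordr p.+1).
  move=> p; rewrite /dcycle_arc /=.
  by rewrite -[(p %% r).+1]addn1 modnDml addn1.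
apply: (comb (M := M)); constructor.
- exact: r0.
- move=> p q; rewrite /M; have -> // : ordr (p + r) = ordr p.
  by apply: val_inj; rewrite /= modnDr.
- by move=> p q; rewrite /M disjoint_sym.
- move=> p; rewrite /M; apply/negP => /disjoint_setI0; rewrite setIid => h.
  by have := hcard (ordr p); rewrite h cards0 => hb; rewrite -hb in b0.
- by move=> p; rewrite /M hdis.
- move=> p q h1 h2.
  have := hor _ _ _ _ (arcS p) (arcS q) h1.
  by move: h2; rewrite /M => /negP.
- move=> a1 a2 a3 a4; apply/negPn/negP; rewrite /M !negb_or !negbK.
  case/andP=> h12 /andP [h13 /andP [h14 /andP [h23 /andP [h24 h34]]]].
  have := card4 h12 h13 h14 h23 h24 h34; rewrite !hcard => hU.
  have := max_card (mem (f (ordr a1) :|: f (ordr a2) :|: f (ordr a3) :|: f (ordr a4))).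
  rewrite card_ord => hk.
  have : b + b + b + b <= k by rewrite -hU.
  lia.
Qed.
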